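(* Let $b>0$, $\beta>0$, $\nu>0$, $\delta>0$, $\alpha>0$ and $p\in(0,1)$, and consider the system \[ S'=b(1-S-pI)-(\beta-\delta)SI+\alpha R,\qquad I'=\big(\beta S-((1-p)b+\nu+\delta)+\delta I\big)I,\qquad R'=\nu I-(b+\alpha-\delta I)R \] on the region $\mathcal{D}^{\mathrm{fra}}=\{(S,I,R): S\ge 0, I\ge 0, R\ge 0, S+I+R=1\}$. Let $\gamma=(1-p)b+\nu+\delta$ and $R_0=\beta/\gamma$. Then the disease-free equilibrium $E_0=(1,0,0)$ is globally asymptotically stable in $\mathcal{D}^{\mathrm{fra}}$ if and only if $R_0\le 1$, and $E_0$ is unstable when $R_0>1$.
   Context: The variables $S,I,R$ are the fractions of susceptible, infectious and recovered individuals in an SIRS model with vertical transmission (fraction $p$ of newborns of infectives infected), birth rate $b$, transmission rate $\beta$, recovery rate $\nu$, disease-induced death rate $\delta$, and rate $\alpha$ of loss of immunity. Globally asymptotically stable (GAS) in a region means Lyapunov stable and attracting every solution starting in that region. *)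

(* Defs.v *)
From Stdlib Require Import Reals.
From Coquelicot Require Import Coquelicot.
Open Scope R_scope.

Definition fS (b beta nu delta alpha p : R) (S I Rc : R) : R :=
  b * (1 - S - p * I) - (beta - delta) * S * I + alpha * Rc.
Definition fI (b beta nu delta alpha p : R) (S I Rc : R) : R :=
  (beta * S - ((1 - p) * b + nu + delta) + delta * I) * I.
Definition fR (b beta nu delta alpha p : R) (S I Rc : R) : R :=
  nu * I - (b + alpha - delta * I) * Rc.

Definition is_solution (b beta nu delta alpha p : R) (S I Rc : R -> R) : Prop :=
  forall t, 0 <= t ->
    is_derive S t (fS b beta nu delta alpha p (S t) (I t) (Rc t)) /\
    is_derive I t (fI b beta nu delta alpha p (S t) (I t) (Rc t)) /\
    is_derive Rc t (fR b beta nu delta alpha p (S t) (I t) (Rc t)).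

Definition in_Dfra (s i r : R) : Prop :=
  0 <= s /\ 0 <= i /\ 0 <= r /\ s + i + r = 1.

Definition distE0 (s i r : R) : R := sqrt ((s - 1)^2 + i^2 + r^2).

Definition E0_stable (b beta nu delta alpha p : R) : Prop :=
  forall eps, 0 < eps -> exists d, 0 < d /\
    forall S I Rc : R -> R,
      is_solution b beta nu delta alpha p S I Rc ->
      in_Dfra (S 0) (I 0) (Rc 0) ->
      distE0 (S 0) (I 0) (Rc 0) < d ->
      forall t, 0 <= t -> distE0 (S t) (I t) (Rc t) < eps.

Definition E0_attracting (b beta nu delta alpha p : R) : Prop :=
  forall S I Rc : R -> R,
    is_solution b beta nu delta alpha p S I Rc ->
    in_Dfra (S 0) (I 0) (Rc 0) ->
    is_lim S p_infty 1 /\ is_lim I p_infty 0 /\ is_lim Rc p_infty 0.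

Definition E0_GAS (b beta nu delta alpha p : R) : Prop :=
  E0_stable b beta nu delta alpha p /\ E0_attracting b beta nu delta alpha p.

Definition E0_unstable (b beta nu delta alpha p : R) : Prop :=
  ~ E0_stable b beta nu delta alpha p.

Definition gamma0 (b nu delta p : R) : R := (1 - p) * b + nu + delta.
Definition basicR0 (b beta nu delta p : R) : R := beta / gamma0 b nu delta p.

(* Main.v *)
Require Import Defs.
From Stdlib Require Import Reals Lra Lia Psatz Factorial.
From Coquelicot Require Import Coquelicot.
Open Scope R_scope.

Lemma cont_der (f : R -> R) x : ex_derive f x -> continuous f x.
Proof. apply (@ex_derive_continuous R_AbsRing R_NormedModule). Qed.

Lemma RInt_bound_pos (h : R -> R) (K : R) (m : nat) :
  (forall s, continuous h s) -> 0 <= K ->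
  (forall s, Rabs (h s) <= K * Rabs s ^ m) ->
  forall t, 0 <= t -> Rabs (RInt h 0 t) <= K * t ^ (S m) / INR (S m).
Proof.
  intros Hc HK Hb t Ht.
  assert (Hex : forall f : R -> R, (forall s, continuous f s) -> ex_RInt f 0 t).
  { intros f Hf. apply (@ex_RInt_continuous R_CompleteNormedModule). intros; apply Hf. }
  eapply Rle_trans. apply abs_RInt_le; auto.
  assert (Hp : is_RInt (fun s => K * s ^ m) 0 t (K * t ^ (S m) / INR (S m))).
  { replace (K * t ^ (S m) / INR (S m)) with
      (minus (K * t ^ (S m) / INR (S m)) (K * 0 ^ (S m) / INR (S m))).
    2:{ unfold minus, plus, opp; simpl. rewrite Rmult_0_l, Rmult_0_r. unfold Rdiv. rewrite Rmult_0_l. ring. }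
    apply (@is_RInt_derive R_CompleteNormedModule (fun s => K * s ^ (S m) / INR (S m))).
    - intros x _. auto_derive. auto. change (match m with 0%nat => 1 | S _ => INR m + 1 end) with (INR (S m)). field. apply not_0_INR; lia.
    - intros x _. apply cont_der. auto_derive. auto. }
  rewrite <- (is_RInt_unique _ _ _ _ Hp).
  apply RInt_le; auto.
  - apply Hex. intros; apply continuous_Rabs_comp; auto.
  - apply Hex. intros; apply cont_der; auto_derive; auto.
  - intros x Hx. rewrite <- (Rabs_right x) at 2 by lra. apply Hb.
Qed.

Lemma RInt_bound_neg (h : R -> R) (K : R) (m : nat) :
  (forall s, continuous h s) -> 0 <= K ->
  (forall s, Rabs (h s) <= K * Rabs s ^ m) ->
  forall t, t <= 0 -> Rabs (RInt h 0 t) <= K * (- t) ^ (S m) / INR (S m).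
Proof.
  intros Hc HK Hb t Ht.
  assert (Hex : forall f : R -> R, (forall s, continuous f s) -> ex_RInt f t 0).
  { intros f Hf. apply (@ex_RInt_continuous R_CompleteNormedModule). intros; apply Hf. }
  rewrite <- (opp_RInt_swap h t 0) by (apply Hex; auto).
  change (Rabs (- RInt h t 0) <= K * (- t) ^ (S m) / INR (S m)).
  rewrite Rabs_Ropp.
  eapply Rle_trans. apply abs_RInt_le; auto.
  assert (Hp : is_RInt (fun s => K * (- s) ^ m) t 0 (K * (-t) ^ (S m) / INR (S m))).
  { replace (K * (-t) ^ (S m) / INR (S m)) with
      (minus (- K * (- 0) ^ (S m) / INR (S m)) (- K * (- t) ^ (S m) / INR (S m))).
    2:{ unfold minus, plus, opp; simpl. rewrite Ropp_0, Rmult_0_l, Rmult_0_r. unfold Rdiv. rewrite Rmult_0_l. ring. }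
    apply (@is_RInt_derive R_CompleteNormedModule (fun s => - K * (- s) ^ (S m) / INR (S m))).
    - intros x _. auto_derive. auto. change (match m with 0%nat => 1 | S _ => INR m + 1 end) with (INR (S m)). field. apply not_0_INR; lia.
    - intros x _. apply cont_der. auto_derive. auto. }
  rewrite <- (is_RInt_unique _ _ _ _ Hp).
  apply RInt_le; auto.
  - apply Hex. intros; apply continuous_Rabs_comp; auto.
  - apply Hex. intros; apply cont_der; auto_derive; auto.
  - intros x Hx. rewrite <- (Rabs_left x) by lra. apply Hb.
Qed.

Lemma RInt_bound (h : R -> R) (K : R) (m : nat) :
  (forall s, continuous h s) -> 0 <= K ->
  (forall s, Rabs (h s) <= K * Rabs s ^ m) ->
  forall t, Rabs (RInt h 0 t) <= K * Rabs t ^ (S m) / INR (S m).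
Proof.
  intros Hc HK Hb t. destruct (Rle_dec 0 t).
  - rewrite (Rabs_right t) by lra. apply RInt_bound_pos; auto.
  - rewrite (Rabs_left t) by lra. apply RInt_bound_neg; auto; lra.
Qed.
Lemma lip_cont (F : R->R->R) L (x y : R -> R) t : 0 <= L ->
  (forall a b a' b', Rabs (F a b - F a' b') <= L*(Rabs (a-a') + Rabs(b-b'))) ->
  continuous x t -> continuous y t -> continuous (fun s => F (x s) (y s)) t.
Proof.
  intros HL HF Hx Hy. unfold continuous in *.
  apply filterlim_locally. intros eps.
  assert (He : 0 < eps / (2 * (L + 1))).
  { apply Rdiv_lt_0_compat. apply cond_pos. lra. }
  pose proof (proj1 (filterlim_locally _ _) Hx (mkposreal _ He)) as Hx'.
  pose proof (proj1 (filterlim_locally _ _) Hy (mkposreal _ He)) as Hy'.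
  generalize (filter_and _ _ Hx' Hy'). apply filter_imp.
  intros s [H1 H2]. revert H1 H2. unfold ball; simpl; unfold AbsRing_ball, abs, minus, plus, opp; simpl.
  intros H1 H2.
  eapply Rle_lt_trans. apply HF.
  pose proof (cond_pos eps).
  apply Rle_lt_trans with (L * (2 * (eps / (2 * (L + 1))))).
  apply Rmult_le_compat_l; auto. unfold Rminus; lra.
  replace (L * (2 * (eps / (2 * (L + 1))))) with (eps * (L / (L+1))) by (field; lra).
  rewrite <- (Rmult_1_r eps) at 2. apply Rmult_lt_compat_l; auto.
  apply Rmult_lt_reg_r with (L+1). lra. unfold Rdiv. rewrite Rmult_assoc, Rinv_l; lra.
Qed.

Fixpoint pic (F G : R -> R -> R) (x0 y0 : R) (n : nat) : (R -> R) * (R -> R) :=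
  match n with
  | O => (fun _ => x0, fun _ => y0)
  | S k => let p := pic F G x0 y0 k in
      (fun t => x0 + RInt (fun s => F (fst p s) (snd p s)) 0 t,
       fun t => y0 + RInt (fun s => G (fst p s) (snd p s)) 0 t)
  end.

Lemma der_RInt_plus (h : R -> R) (x0 t : R) :
  (forall s, continuous h s) ->
  is_derive (fun t => x0 + RInt h 0 t) t (h t).
Proof.
  intros Hc.
  assert (H : is_derive (fun t => RInt h 0 t) t (h t)).
  { apply (is_derive_RInt h (fun t => RInt h 0 t) 0 t).
    - apply filter_forall. intros b. apply (@RInt_correct R_CompleteNormedModule).
      apply (@ex_RInt_continuous R_CompleteNormedModule). intros; apply Hc.
    - apply Hc. }
  pose proof (is_derive_plus (fun _ => x0) _ t 0 _ (is_derive_const x0 t) H) as H2.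
  replace (h t) with (plus 0 (h t)). exact H2. unfold plus; simpl; ring.
Qed.

Definition Lip (F : R -> R -> R) (L : R) :=
  forall a b a' b', Rabs (F a b - F a' b') <= L * (Rabs (a - a') + Rabs (b - b')).

Lemma pic_cont F G x0 y0 L : 0 <= L -> Lip F L -> Lip G L ->
  forall n t, continuous (fst (pic F G x0 y0 n)) t /\ continuous (snd (pic F G x0 y0 n)) t.
Proof.
  intros HL HF HG n. induction n as [|n IH]; intros t.
  - simpl. split; apply continuous_const.
  - simpl. split; apply cont_der; eexists; apply der_RInt_plus; intros s;
      apply lip_cont with L; auto; apply IH.
Qed.

Lemma pic_derx F G x0 y0 L : 0 <= L -> Lip F L -> Lip G L ->
  forall n t, is_derive (fst (pic F G x0 y0 (S n))) t
      (F (fst (pic F G x0 y0 n) t) (snd (pic F G x0 y0 n) t)).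
Proof.
  intros HL HF HG n t. simpl. apply der_RInt_plus with (h := fun s => F _ _).
  intros s; apply lip_cont with L; auto; apply (pic_cont F G x0 y0 L); auto.
Qed.

Lemma pic_dery F G x0 y0 L : 0 <= L -> Lip F L -> Lip G L ->
  forall n t, is_derive (snd (pic F G x0 y0 (S n))) t
      (G (fst (pic F G x0 y0 n) t) (snd (pic F G x0 y0 n) t)).
Proof.
  intros HL HF HG n t. simpl. apply der_RInt_plus with (h := fun s => G _ _).
  intros s; apply lip_cont with L; auto; apply (pic_cont F G x0 y0 L); auto.
Qed.

Lemma cont_minus (f g : R -> R) x : continuous f x -> continuous g x -> continuous (fun s => f s - g s) x.
Proof. apply (@continuous_minus R_UniformSpace R_AbsRing R_NormedModule). Qed.

Lemma RInt_sub (h1 h0 : R -> R) t : (forall s, continuous h1 s) -> (forall s, continuous h0 s) ->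
  RInt h1 0 t - RInt h0 0 t = RInt (fun s => h1 s - h0 s) 0 t.
Proof.
  intros H1 H0.
  symmetry. apply (@RInt_minus R_CompleteNormedModule);
  apply (@ex_RInt_continuous R_CompleteNormedModule); intros; auto.
Qed.

Lemma pic_bound F G x0 y0 L M : 0 <= L -> 0 <= M -> Lip F L -> Lip G L ->
  (forall a b, Rabs (F a b) <= M) -> (forall a b, Rabs (G a b) <= M) ->
  forall n t,
  Rabs (fst (pic F G x0 y0 (S n)) t - fst (pic F G x0 y0 n) t) +
  Rabs (snd (pic F G x0 y0 (S n)) t - snd (pic F G x0 y0 n) t)
  <= 2 * M * (2 * L) ^ n * Rabs t ^ (S n) / INR (fact (S n)).
Proof.
  intros HL HM HF HG BF BG n. induction n as [|n IH]; intros t.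
  - assert (Ex : forall a (r : R), a + r - a = r) by (intros; ring).
    simpl. rewrite !Ex.
    assert (A1 := RInt_bound (fun _ => F x0 y0) M 0 (fun s => continuous_const _ s) HM
       (fun s => ltac:(simpl; rewrite Rmult_1_r; apply BF)) t).
    assert (A2 := RInt_bound (fun _ => G x0 y0) M 0 (fun s => continuous_const _ s) HM
       (fun s => ltac:(simpl; rewrite Rmult_1_r; apply BG)) t).
    simpl in A1, A2. lra.
  - set (px := fun k => fst (pic F G x0 y0 k)).
    set (py := fun k => snd (pic F G x0 y0 k)).
    assert (Hc : forall k s, continuous (px k) s /\ continuous (py k) s)
      by (intros; apply (pic_cont F G x0 y0 L); auto).
    assert (E1 : px (S (S n)) t - px (S n) t =
      RInt (fun s => F (px (S n) s) (py (S n) s) - F (px n s) (py n s)) 0 t).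
    { unfold px, py.
      change (fst (pic F G x0 y0 (S (S n))) t) with (x0 + RInt (fun s => F (fst (pic F G x0 y0 (S n)) s) (snd (pic F G x0 y0 (S n)) s)) 0 t).
      change (fst (pic F G x0 y0 (S n)) t) with (x0 + RInt (fun s => F (fst (pic F G x0 y0 n) s) (snd (pic F G x0 y0 n) s)) 0 t).
      rewrite <- RInt_sub. ring.
      all: intros; apply lip_cont with L; auto; apply (pic_cont F G x0 y0 L); auto. }
    assert (E2 : py (S (S n)) t - py (S n) t =
      RInt (fun s => G (px (S n) s) (py (S n) s) - G (px n s) (py n s)) 0 t).
    { unfold px, py.
      change (snd (pic F G x0 y0 (S (S n))) t) with (y0 + RInt (fun s => G (fst (pic F G x0 y0 (S n)) s) (snd (pic F G x0 y0 (S n)) s)) 0 t).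
      change (snd (pic F G x0 y0 (S n)) t) with (y0 + RInt (fun s => G (fst (pic F G x0 y0 n) s) (snd (pic F G x0 y0 n) s)) 0 t).
      rewrite <- RInt_sub. ring.
      all: intros; apply lip_cont with L; auto; apply (pic_cont F G x0 y0 L); auto. }
    change (Rabs (px (S (S n)) t - px (S n) t) + Rabs (py (S (S n)) t - py (S n) t)
      <= 2 * M * (2 * L) ^ S n * Rabs t ^ S (S n) / INR (fact (S (S n)))).
    rewrite E1, E2.
    set (K := L * (2 * M * (2 * L) ^ n / INR (fact (S n)))).
    assert (HK : 0 <= K).
    { unfold K. apply Rmult_le_pos; auto. unfold Rdiv. apply Rmult_le_pos.
      apply Rmult_le_pos. lra. apply pow_le; lra. left; apply Rinv_0_lt_compat, lt_0_INR, lt_O_fact. }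
    assert (Hb : forall (H : R -> R -> R), Lip H L -> forall s,
      Rabs (H (px (S n) s) (py (S n) s) - H (px n s) (py n s)) <= K * Rabs s ^ (S n)).
    { intros H HH s. eapply Rle_trans. apply HH.
      unfold K. replace (L * (2 * M * (2 * L) ^ n / INR (fact (S n))) * Rabs s ^ S n)
        with (L * (2 * M * (2 * L) ^ n * Rabs s ^ S n / INR (fact (S n)))) by (unfold Rdiv; ring).
      apply Rmult_le_compat_l; auto. apply IH. }
    assert (Hcc : forall (H : R -> R -> R), Lip H L -> forall s,
      continuous (fun s => H (px (S n) s) (py (S n) s) - H (px n s) (py n s)) s).
    { intros H HH s. apply cont_minus;
      apply lip_cont with L; auto; apply Hc. }
    pose proof (RInt_bound _ K (S n) (Hcc F HF) HK (Hb F HF) t) as B1.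
    pose proof (RInt_bound _ K (S n) (Hcc G HG) HK (Hb G HG) t) as B2.
    eapply Rle_trans. apply Rplus_le_compat; [apply B1 | apply B2].
    unfold K. rewrite (fact_simpl (S n)), mult_INR.
    assert (0 < INR (fact (S n))) by apply lt_0_INR, lt_O_fact.
    assert (0 < INR (S (S n))) by (apply lt_0_INR; lia).
    simpl pow. right. field. lra.
Qed.

Lemma exp_series_ex (x : R) : ex_series (fun n => x ^ n / INR (fact n)).
Proof.
  exists (exp x). pose proof (is_exp_Reals x) as H. unfold is_pseries in H.
  eapply is_series_ext; [|exact H]. intros n. simpl. rewrite pow_n_pow.
  unfold scal; simpl; unfold mult; simpl. reflexivity.
Qed.

Lemma fact_pos n : 0 < INR (fact n).
Proof. apply lt_0_INR, lt_O_fact. Qed.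

Lemma series_Un_cv (a : nat -> R) : ex_series a -> Un_cv (fun N => sum_f_R0 a N) (Series a).
Proof.
  intros H. apply Series_correct in H. apply is_series_Reals in H. exact H.
Qed.

Lemma cvu_comp (u : nat -> R -> R) (C D : R) : 0 <= C -> 0 <= D ->
  (forall n y, Rabs (u n y) <= C * D ^ n * Rabs y ^ (S n) / INR (fact (S n))) ->
  (forall y, ex_series (fun k => u k y)) /\
  forall r : posreal, CVU (fun N y => sum_f_R0 (fun k => u k y) N)
                          (fun y => Series (fun k => u k y)) 0 r.
Proof.
  intros HC HD Hb.
  assert (Hr : forall (r : posreal) n y, Rabs y < r ->
     Rabs (u n y) <= C * r * (D * r) ^ n / INR (fact n)).
  { intros r n y Hy. eapply Rle_trans. apply Hb.
    pose proof (cond_pos r). pose proof (fact_pos n).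
    rewrite (fact_simpl n), mult_INR.
    assert (1 <= INR (S n)) by (rewrite S_INR; pose proof (pos_INR n); lra).
    assert (Rabs y ^ S n <= r ^ S n) by (apply pow_incr; split; [apply Rabs_pos | lra]).
    assert (0 <= D ^ n) by (apply pow_le; auto).
    assert (0 <= Rabs y ^ S n) by (apply pow_le, Rabs_pos).
    apply Rle_trans with (C * D ^ n * r ^ S n / INR (fact n)).
    { unfold Rdiv. apply Rmult_le_compat.
      - apply Rmult_le_pos; auto. apply Rmult_le_pos; auto.
      - left; apply Rinv_0_lt_compat. apply Rmult_lt_0_compat; lra.
      - apply Rmult_le_compat_l; auto. apply Rmult_le_pos; auto.
      - apply Rinv_le_contravar; auto. rewrite <- (Rmult_1_l (INR (fact n))) at 1.
        apply Rmult_le_compat_r; lra. }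
    right. rewrite Rpow_mult_distr. simpl pow. unfold Rdiv; ring. }
  assert (HA : forall r : R, ex_series (fun n => C * r * (D * r) ^ n / INR (fact n))).
  { intros r. eapply ex_series_ext; [|apply (ex_series_scal_l (C * r)), (exp_series_ex (D * r))].
    intros n. unfold scal; simpl; unfold mult; simpl. unfold Rdiv; ring. }
  assert (Hex : forall y, ex_series (fun k => u k y)).
  { intros y. set (r := mkposreal (Rabs y + 1) ltac:(pose proof (Rabs_pos y); lra)).
    apply (@ex_series_le R_AbsRing R_CompleteNormedModule _ (fun n => C * r * (D * r) ^ n / INR (fact n))); [|apply HA].
    intros n. apply Hr. simpl; lra. }
  split; auto.
  intros r.
  pose (cv := fun y => exist (fun l => Un_cv (fun N => SP u N y) l) (Series (fun k => u k y))
                         (series_Un_cv _ (Hex y))).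
  apply (CVN_CVU u cv r).
  exists (fun n => C * r * (D * r) ^ n / INR (fact n)).
  exists (Series (fun n => C * r * (D * r) ^ n / INR (fact n))).
  split.
  - assert (E : forall n, Rabs (C * r * (D * r) ^ n / INR (fact n)) = C * r * (D * r) ^ n / INR (fact n)).
    { intros n. apply Rabs_right. apply Rle_ge. pose proof (cond_pos r). pose proof (fact_pos n).
      unfold Rdiv. apply Rmult_le_pos. apply Rmult_le_pos. apply Rmult_le_pos; lra.
      apply pow_le. apply Rmult_le_pos; lra. left; apply Rinv_0_lt_compat; lra. }
    intros eps Heps. destruct (series_Un_cv _ (HA r) eps Heps) as [N HN].
    exists N. intros n Hn. specialize (HN n Hn).
    erewrite sum_eq. exact HN. intros; apply E.
  - intros n y Hy. apply Hr. unfold Boule in Hy. rewrite Rminus_0_r in Hy. exact Hy.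
Qed.

Lemma Series_0 : Series (fun _ => 0) = 0.
Proof. rewrite (Series_ext _ (fun n => 0 * 1)) by (intros; ring). rewrite Series_scal_l. ring. Qed.

Lemma telescope (p : nat -> R -> R) N y :
  sum_f_R0 (fun k => p (S k) y - p k y) N = p (S N) y - p O y.
Proof. induction N; simpl; [ring | rewrite IHN; ring]. Qed.

Theorem picard F G L M x0 y0 : 0 <= L -> 0 <= M -> Lip F L -> Lip G L ->
  (forall a b, Rabs (F a b) <= M) -> (forall a b, Rabs (G a b) <= M) ->
  exists X Y : R -> R, X 0 = x0 /\ Y 0 = y0 /\
    forall t, is_derive X t (F (X t) (Y t)) /\ is_derive Y t (G (X t) (Y t)).
Proof.
  intros HL HM HF HG BF BG.
  set (px := fun k => fst (pic F G x0 y0 k)).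
  set (py := fun k => snd (pic F G x0 y0 k)).
  assert (HB := pic_bound F G x0 y0 L M HL HM HF HG BF BG).
  assert (Bx : forall n y, Rabs (px (S n) y - px n y) <= 2 * M * (2 * L) ^ n * Rabs y ^ (S n) / INR (fact (S n))).
  { intros n y. eapply Rle_trans; [|apply HB]. pose proof (Rabs_pos (py (S n) y - py n y)). unfold px, py in *. lra. }
  assert (By : forall n y, Rabs (py (S n) y - py n y) <= 2 * M * (2 * L) ^ n * Rabs y ^ (S n) / INR (fact (S n))).
  { intros n y. eapply Rle_trans; [|apply HB]. pose proof (Rabs_pos (px (S n) y - px n y)). unfold px, py in *. lra. }
  destruct (cvu_comp (fun k y => px (S k) y - px k y) (2 * M) (2 * L) ltac:(lra) ltac:(lra) Bx) as [Ex Cx].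
  destruct (cvu_comp (fun k y => py (S k) y - py k y) (2 * M) (2 * L) ltac:(lra) ltac:(lra) By) as [Ey Cy].
  set (X := fun y => x0 + Series (fun k => px (S k) y - px k y)).
  set (Y := fun y => y0 + Series (fun k => py (S k) y - py k y)).
  assert (Ux : forall r : posreal, CVU (fun N => px (S N)) X 0 r).
  { intros r eps Heps. destruct (Cx r eps Heps) as [N HN]. exists N. intros n y Hn Hy.
    specialize (HN n y Hn Hy). simpl in HN. rewrite telescope in HN. unfold X.
    replace (px 0%nat y) with x0 in HN by reflexivity.
    replace (x0 + Series (fun k : nat => px (S k) y - px k y) - px (S n) y) with
      (Series (fun k : nat => px (S k) y - px k y) - (px (S n) y - x0)) by ring. exact HN. }
  assert (Uy : forall r : posreal, CVU (fun N => py (S N)) Y 0 r).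
  { intros r eps Heps. destruct (Cy r eps Heps) as [N HN]. exists N. intros n y Hn Hy.
    specialize (HN n y Hn Hy). simpl in HN. rewrite telescope in HN. unfold Y.
    replace (py 0%nat y) with y0 in HN by reflexivity.
    replace (y0 + Series (fun k : nat => py (S k) y - py k y) - py (S n) y) with
      (Series (fun k : nat => py (S k) y - py k y) - (py (S n) y - y0)) by ring. exact HN. }
  assert (Hz : forall k, px k 0 = x0 /\ py k 0 = y0).
  { intros [|k]; [split; reflexivity|].
    unfold px, py; simpl. rewrite !RInt_point. unfold zero; simpl. split; ring. }
  exists X, Y. split; [|split].
  - unfold X. rewrite (Series_ext _ (fun _ => 0)). rewrite Series_0. ring.
   
    intros k. rewrite (proj1 (Hz (S k))), (proj1 (Hz k)). ring.
  - unfold Y. rewrite (Series_ext _ (fun _ => 0)). rewrite Series_0. ring.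
   
    intros k. rewrite (proj2 (Hz (S k))), (proj2 (Hz k)). ring.
  - intros t.
    set (r := mkposreal (Rabs t + 1) ltac:(pose proof (Rabs_pos t); lra)).
    assert (Bt : Boule 0 r t) by (unfold Boule; simpl; rewrite Rminus_0_r; lra).
    assert (UH : forall (H : R -> R -> R), Lip H L ->
      CVU (fun n y => H (px (S n) y) (py (S n) y)) (fun y => H (X y) (Y y)) 0 r).
    { intros H HH eps Heps.
      assert (He : 0 < eps / (2 * (L + 1))) by (apply Rdiv_lt_0_compat; lra).
      destruct (Ux r _ He) as [N1 HN1]. destruct (Uy r _ He) as [N2 HN2].
      exists (max N1 N2). intros n y Hn Hy.
      specialize (HN1 n y ltac:(lia) Hy). specialize (HN2 n y ltac:(lia) Hy).
      eapply Rle_lt_trans. apply HH.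
      apply Rle_lt_trans with (L * (2 * (eps / (2 * (L + 1))))).
      apply Rmult_le_compat_l; auto. lra.
      replace (L * (2 * (eps / (2 * (L + 1))))) with (eps * (L / (L+1))) by (field; lra).
      rewrite <- (Rmult_1_r eps) at 2. apply Rmult_lt_compat_l; auto.
      apply Rmult_lt_reg_r with (L+1). lra. unfold Rdiv. rewrite Rmult_assoc, Rinv_l; lra. }
    assert (PW : forall (p : nat -> R -> R) (Z : R -> R), (forall r : posreal, CVU (fun N => p (S N)) Z 0 r) ->
       forall y, Un_cv (fun n => p (S (S n)) y) (Z y)).
    { intros p Z HZ y eps Heps.
      set (r' := mkposreal (Rabs y + 1) ltac:(pose proof (Rabs_pos y); lra)).
      destruct (HZ r' eps Heps) as [N HN]. exists N. intros n Hn.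
      unfold Rdist. rewrite Rabs_minus_sym. apply HN. lia.
      unfold Boule; simpl; rewrite Rminus_0_r; lra. }
    split; apply is_derive_Reals.
    + apply (CVU_derivable (fun n => px (S (S n))) (fun n y => F (px (S n) y) (py (S n) y))
               X (fun y => F (X y) (Y y)) 0 r).
      { apply UH; auto. } { intros y Hy; apply (PW px X Ux). } { intros n y _; apply is_derive_Reals; apply (pic_derx F G x0 y0 L); auto. } { exact Bt. }
    + apply (CVU_derivable (fun n => py (S (S n))) (fun n y => G (px (S n) y) (py (S n) y))
               Y (fun y => G (X y) (Y y)) 0 r).
      all: first [ exact Bt | apply UH; auto | intros y Hy; apply (PW py Y Uy) | intros n y _; apply is_derive_Reals; apply (pic_dery F G x0 y0 L); auto ].
Qed.
Lemma cont_eps (f : R -> R) t : continuous f t -> forall eps, 0 < eps ->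
  exists d, 0 < d /\ forall s, Rabs (s - t) < d -> Rabs (f s - f t) < eps.
Proof.
  intros Hc eps He.
  destruct (proj1 (filterlim_locally _ _) Hc (mkposreal _ He)) as [d Hd].
  exists d. split. apply cond_pos. intros s Hs. apply (Hd s). exact Hs.
Qed.

Lemma pos_lemma (x dx a : R -> R) (t0 : R) :
  (forall t, t0 <= t -> is_derive x t (dx t)) ->
  (forall t, t0 <= t -> continuous a t) ->
  0 <= x t0 ->
  (forall t, t0 <= t -> x t < 0 -> a t * x t <= dx t) ->
  forall t, t0 <= t -> 0 <= x t.
Proof.
  intros Hd Ha H0 Hi t1 Ht1.
  destruct (Rle_dec 0 (x t1)) as [|Hn]; auto. exfalso. apply Rnot_le_lt in Hn.
  assert (Hxc : forall s, t0 <= s -> continuous x s).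
  { intros s Hs. apply (@ex_derive_continuous R_AbsRing R_NormedModule). eexists; apply Hd; auto. }
  set (E := fun s => t0 <= s <= t1 /\ 0 <= x s).
  destruct (completeness E) as [m [Hub Hlub]].
  { exists t1. intros s [Hs _]. lra. }
  { exists t0. split; [lra | auto]. }
  assert (Hm0 : t0 <= m) by (apply Hub; split; [lra|auto]).
  assert (Hm1 : m <= t1) by (apply Hlub; intros s [Hs _]; lra).
  assert (Hxm : 0 <= x m).
  { destruct (Rle_dec 0 (x m)) as [|Hxm]; auto. apply Rnot_le_lt in Hxm. exfalso.
    destruct (cont_eps x m (Hxc m Hm0) (- x m) ltac:(lra)) as [d [Hdp Hdd]].
    assert (m <= m - d / 2).
    { apply Hlub. intros s [Hs1 Hs2]. destruct (Rle_dec s (m - d/2)) as [|Hs]; auto.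
      exfalso. assert (s <= m) by (apply Hub; split; auto).
      assert (Rabs (s - m) < d) by (rewrite Rabs_left1; lra).
      specialize (Hdd s H1). apply Rabs_def2 in Hdd. lra. }
    lra. }
  assert (Hmt : m < t1) by (destruct (Req_dec m t1); [subst; lra | lra]).
  assert (Hneg : forall s, m < s <= t1 -> x s < 0).
  { intros s Hs. destruct (Rle_dec 0 (x s)) as [Hp|Hp]. 
    - assert (s <= m) by (apply Hub; split; [lra|auto]). lra.
    - lra. }
  destruct (cont_eps a m (Ha m Hm0) 1 ltac:(lra)) as [eta [Hep Hea]].
  set (K := a m + 1).
  set (t2 := Rmin t1 (m + eta / 2)).
  assert (Ht2 : m < t2 <= t1) by (unfold t2; unfold Rmin; destruct (Rle_dec t1 (m + eta/2)); lra).
  assert (Ht2' : t2 <= m + eta / 2) by (unfold t2; apply Rmin_r).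
  set (y := fun s => x s * exp (- K * s)).
  set (dy := fun s => dx s * exp (- K * s) + x s * (- K * exp (- K * s))).
  destruct (MVT_cor2 y dy m t2) as [c [Hc1 Hc2]]; [lra| |].
  { intros c Hc. apply is_derive_Reals. unfold y, dy.
    apply (is_derive_mult x (fun s => exp (- K * s))).
    - apply Hd. lra.
    - auto_derive; auto. ring.
    - intros; unfold mult; simpl; ring. }
  assert (Hxc2 : x c < 0) by (apply Hneg; lra).
  assert (Hac : a c <= K).
  { assert (Rabs (c - m) < eta) by (rewrite Rabs_right; lra).
    specialize (Hea c H). apply Rabs_def2 in Hea. unfold K; lra. }
  assert (Hdc : K * x c <= dx c).
  { eapply Rle_trans; [|apply Hi; lra]. nra. }
  assert (0 <= dy c).
  { unfold dy. pose proof (exp_pos (- K * c)). nra. }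
  assert (y m <= y t2) by nra.
  unfold y in H1. pose proof (exp_pos (- K * m)). pose proof (exp_pos (- K * t2)).
  assert (x t2 < 0) by (apply Hneg; lra). nra.
Qed.

Lemma cR_plus (f g : R -> R) (t : R) : continuous f t -> continuous g t -> continuous (fun s => f s + g s) t.
Proof. apply (@continuous_plus R_UniformSpace R_AbsRing R_NormedModule). Qed.
Lemma cR_mult (f g : R -> R) (t : R) : continuous f t -> continuous g t -> continuous (fun s => f s * g s) t.
Proof. apply (@continuous_mult R_UniformSpace R_AbsRing). Qed.
Lemma cR_const (c : R) t : continuous (fun _ : R => c) t.
Proof. apply continuous_const. Qed.
Lemma dR_plus (f g : R -> R) (t df dg : R) : is_derive f t df -> is_derive g t dg -> is_derive (fun s => f s + g s) t (df + dg).
Proof. intros H1 H2. apply (is_derive_plus f g t df dg H1 H2). Qed.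
Lemma dR_minus (f g : R -> R) (t df dg : R) : is_derive f t df -> is_derive g t dg -> is_derive (fun s => f s - g s) t (df - dg).
Proof. intros H1 H2. apply (is_derive_minus f g t df dg H1 H2). Qed.
Lemma dR_const (c : R) t : is_derive (fun _ => c) t 0.
Proof. apply (@is_derive_const R_AbsRing R_NormedModule). Qed.
Lemma dR_ext (f g : R -> R) (t df dg : R) : (forall s, f s = g s) -> df = dg -> is_derive f t df -> is_derive g t dg.
Proof. intros H1 H2 H3. subst. apply (is_derive_ext f g); auto. Qed.
Lemma der_cont (f : R -> R) (t df : R) : is_derive f t df -> continuous f t.
Proof. intros H. apply cont_der. eexists; eauto. Qed.


Definition cl (x : R) : R := Rmax 0 (Rmin 1 x).
Lemma cl_bounds x : 0 <= cl x <= 1.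
Proof. unfold cl, Rmax, Rmin; repeat destruct Rle_dec; lra. Qed.
Lemma cl_id x : 0 <= x <= 1 -> cl x = x.
Proof. unfold cl, Rmax, Rmin; repeat destruct Rle_dec; lra. Qed.
Lemma cl_neg x : x <= 0 -> cl x = 0.
Proof. unfold cl, Rmax, Rmin; repeat destruct Rle_dec; lra. Qed.
Lemma cl_le x : 0 <= x -> cl x <= x.
Proof. unfold cl, Rmax, Rmin; repeat destruct Rle_dec; lra. Qed.
Lemma cl_lip x y : Rabs (cl x - cl y) <= Rabs (x - y).
Proof. unfold cl, Rmax, Rmin; repeat destruct Rle_dec; unfold Rabs; repeat destruct Rcase_abs; lra. Qed.
Lemma abs_prod_le u v U V : Rabs u <= U -> Rabs v <= V -> Rabs (u * v) <= U * V.
Proof. intros. rewrite Rabs_mult. apply Rmult_le_compat; auto; apply Rabs_pos. Qed.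

Section Model.
Variables b beta nu delta alpha p : R.
Hypotheses (Hb : 0 < b) (Hbeta : 0 < beta) (Hnu : 0 < nu) (Hdelta : 0 < delta)
  (Halpha : 0 < alpha) (Hp : 0 < p < 1).
Let gam := gamma0 b nu delta p.

Lemma invariance S I Rc : is_solution b beta nu delta alpha p S I Rc ->
  in_Dfra (S 0) (I 0) (Rc 0) -> forall t, 0 <= t ->
  in_Dfra (S t) (I t) (Rc t).
Proof.
  intros Hs [H0S [H0I [H0R H0N]]].
  assert (dS : forall t, 0 <= t -> is_derive S t _) by (intros t Ht; exact (proj1 (Hs t Ht))).
  assert (dI : forall t, 0 <= t -> is_derive I t _) by (intros t Ht; exact (proj1 (proj2 (Hs t Ht)))).
  assert (dR : forall t, 0 <= t -> is_derive Rc t _) by (intros t Ht; exact (proj2 (proj2 (Hs t Ht)))).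
  assert (cI : forall t, 0 <= t -> continuous I t) by (intros t Ht; eapply der_cont, dI, Ht).
  assert (cS : forall t, 0 <= t -> continuous S t) by (intros t Ht; eapply der_cont, dS, Ht).
  assert (dN : forall t, 0 <= t -> is_derive (fun s => S s + I s + Rc s - 1) t
     ((- b + delta * I t) * (S t + I t + Rc t - 1))).
  { intros t Ht. eapply dR_ext; [intros; reflexivity| |].
    2:{ apply dR_minus; [|apply dR_const]. apply dR_plus; [apply dR_plus|]; eauto. }
    unfold fS, fI, fR. ring. }
  assert (cA : forall t, 0 <= t -> continuous (fun s => - b + delta * I s) t).
  { intros t Ht. apply (cR_plus (fun _ => - b) (fun s => delta * I s)); [apply cR_const|].
    apply (cR_mult (fun _ => delta)); [apply cR_const| auto]. }
  assert (HN : forall t, 0 <= t -> S t + I t + Rc t = 1).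
  { intros t Ht.
    set (x := fun s => S s + I s + Rc s - 1).
    assert (A1 : 0 <= x t).
    { apply (pos_lemma x (fun s => (- b + delta * I s) * x s) (fun s => - b + delta * I s) 0).
      intros s Hs0; unfold x; apply dN; exact Hs0. exact cA. unfold x; lra. intros; apply Rle_refl. exact Ht. }
    assert (dN' : forall t, 0 <= t -> is_derive (fun s => - x s) t
       ((- b + delta * I t) * (- x t))).
    { intros s Hs0. apply (dR_ext (fun s => 0 - x s) (fun s => - x s) s (0 - (- b + delta * I s) * x s)).
      intros; ring. ring. apply dR_minus. apply dR_const. unfold x; apply dN; exact Hs0. }
    assert (A2 : 0 <= - x t).
    { apply (pos_lemma (fun s => - x s) (fun s => (- b + delta * I s) * (- x s)) (fun s => - b + delta * I s) 0).
      intros s Hs0; apply dN'; exact Hs0. exact cA. unfold x; lra. intros; apply Rle_refl. exact Ht. }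
    unfold x in A1, A2. lra. }
  assert (HI : forall t, 0 <= t -> 0 <= I t).
  { apply (pos_lemma I (fun t => fI b beta nu delta alpha p (S t) (I t) (Rc t))
       (fun s => beta * S s + - gamma0 b nu delta p + delta * I s) 0).
    - intros t Ht; apply dI; exact Ht.
    - intros t Ht. apply cR_plus; [apply (cR_plus (fun s => beta * S s) (fun _ => - gamma0 b nu delta p))|].
      apply (cR_mult (fun _ => beta)); [apply cR_const| auto]. apply cR_const.
      apply (cR_mult (fun _ => delta)); [apply cR_const| auto].
    - exact H0I.
    - intros t Ht _. unfold fI, gamma0. right; ring. }
  assert (HR : forall t, 0 <= t -> 0 <= Rc t).
  { apply (pos_lemma Rc (fun t => fR b beta nu delta alpha p (S t) (I t) (Rc t))
       (fun s => - (b + alpha) + delta * I s) 0).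
    - intros t Ht; apply dR; exact Ht.
    - intros t Ht. apply (cR_plus (fun _ => - (b + alpha)) (fun s => delta * I s)); [apply cR_const|].
      apply (cR_mult (fun _ => delta)); [apply cR_const| auto].
    - exact H0R.
    - intros t Ht _. unfold fR. pose proof (HI t Ht).
      assert (0 <= nu * I t) by (apply Rmult_le_pos; lra). lra. }
  assert (HS : forall t, 0 <= t -> 0 <= S t).
  { apply (pos_lemma S (fun t => fS b beta nu delta alpha p (S t) (I t) (Rc t))
       (fun s => - (beta - delta) * I s) 0).
    - intros t Ht; apply dS; exact Ht.
    - intros t Ht. apply (cR_mult (fun _ => - (beta - delta))); [apply cR_const| auto].
    - exact H0S.
    - intros t Ht _. unfold fS. pose proof (HI t Ht). pose proof (HR t Ht). pose proof (HN t Ht).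
      assert (b * (1 - S t - p * I t) = b * (1 - p) * I t + b * Rc t) by (replace (1 - S t) with (I t + Rc t) by lra; ring).
      assert (0 <= b * (1 - p) * I t) by (apply Rmult_le_pos; [apply Rmult_le_pos|]; lra).
      assert (0 <= b * Rc t) by (apply Rmult_le_pos; lra).
      assert (0 <= alpha * Rc t) by (apply Rmult_le_pos; lra). lra. }
  intros t Ht. repeat split; auto.
Qed.

Lemma h_bound S I Rc : beta <= gamma0 b nu delta p ->
  exists c, 0 < c /\ forall t, 0 <= t -> in_Dfra (S t) (I t) (Rc t) ->
  fI b beta nu delta alpha p (S t) (I t) (Rc t) <= - c * I t * I t.
Proof.
  intros Hbg. unfold gamma0 in Hbg.
  destruct (Rlt_dec delta beta) as [Hdb|Hdb].
  - exists (beta - delta). split; [lra|]. intros t Ht [HS [HI [HR HN]]].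
    unfold fI. assert (E : S t = 1 - I t - Rc t) by lra. rewrite E.
    assert (0 <= beta * Rc t) by (apply Rmult_le_pos; lra).
    assert (beta * (1 - I t - Rc t) - ((1 - p) * b + nu + delta) + delta * I t <= - (beta - delta) * I t) by lra.
    replace (- (beta - delta) * I t * I t) with ((- (beta - delta) * I t) * I t) by ring.
    apply Rmult_le_compat_r; auto.
  - exists ((1 - p) * b + nu). split.
    { assert (0 < (1 - p) * b) by (apply Rmult_lt_0_compat; lra). lra. }
    intros t Ht [HS [HI [HR HN]]].
    unfold fI. assert (E : S t = 1 - I t - Rc t) by lra. rewrite E.
    assert (0 <= beta * Rc t) by (apply Rmult_le_pos; lra).
    assert (0 <= ((1 - p) * b + nu + delta - beta) * (1 - I t)) by (apply Rmult_le_pos; lra).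
    assert (beta * (1 - I t - Rc t) - ((1 - p) * b + nu + delta) + delta * I t <= - ((1 - p) * b + nu) * I t) by lra.
    replace (- ((1 - p) * b + nu) * I t * I t) with ((- ((1 - p) * b + nu) * I t) * I t) by ring.
    apply Rmult_le_compat_r; auto.
Qed.

Lemma I_decay S I Rc : beta <= gamma0 b nu delta p ->
  is_solution b beta nu delta alpha p S I Rc -> in_Dfra (S 0) (I 0) (Rc 0) ->
  exists c, 0 < c /\ forall t, 0 <= t -> I t <= I 0 / (1 + c * I 0 * t).
Proof.
  intros Hbg Hs H0.
  destruct (h_bound S I Rc Hbg) as [c [Hc Hh]].
  exists c. split; auto.
  assert (Hinv := invariance S I Rc Hs H0).
  assert (HI0 : 0 <= I 0) by (destruct H0 as [_ [? _]]; auto).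
  set (u := fun t => I 0 / (1 + c * I 0 * t)).
  assert (Hpos : forall t, 0 <= t -> 0 < 1 + c * I 0 * t).
  { intros t Ht. assert (0 <= c * I 0 * t) by (apply Rmult_le_pos; [apply Rmult_le_pos|]; lra). lra. }
  assert (du : forall t, 0 <= t -> is_derive u t (- c * u t * u t)).
  { intros t Ht. unfold u. specialize (Hpos t Ht). auto_derive. lra. field. lra. }
  assert (dI : forall t, 0 <= t -> is_derive I t (fI b beta nu delta alpha p (S t) (I t) (Rc t)))
    by (intros t Ht; exact (proj1 (proj2 (Hs t Ht)))).
  assert (cI : forall t, 0 <= t -> continuous I t) by (intros t Ht; eapply der_cont, dI, Ht).
  assert (cu : forall t, 0 <= t -> continuous u t) by (intros t Ht; eapply der_cont, du, Ht).
  intros t Ht.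
  assert (A : 0 <= u t - I t).
  { apply (pos_lemma (fun s => u s - I s) (fun s => - c * u s * u s - fI b beta nu delta alpha p (S s) (I s) (Rc s))
       (fun s => - c * (u s + I s)) 0).
    - intros s Hs0. apply dR_minus; [apply du | apply dI]; exact Hs0.
    - intros s Hs0. apply (cR_mult (fun _ => - c)); [apply cR_const|]. apply cR_plus; auto.
    - unfold u. rewrite Rmult_0_r, Rplus_0_r, Rdiv_1_r. lra.
    - intros s Hs0 _. specialize (Hh s Hs0 (Hinv s Hs0)). lra.
    - exact Ht. }
  unfold u in A. lra.
Qed.

Lemma R_upper S I Rc A : is_solution b beta nu delta alpha p S I Rc -> in_Dfra (S 0) (I 0) (Rc 0) ->
  (forall t, 0 <= t -> I t <= A) -> delta * A < b + alpha ->
  forall t, 0 <= t -> Rc t <= Rmax (Rc 0) (nu * A / (b + alpha - delta * A)).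
Proof.
  intros Hs H0 HA Hk.
  assert (Hinv := invariance S I Rc Hs H0).
  set (K := Rmax (Rc 0) (nu * A / (b + alpha - delta * A))).
  assert (dR : forall t, 0 <= t -> is_derive Rc t (fR b beta nu delta alpha p (S t) (I t) (Rc t)))
    by (intros t Ht; exact (proj2 (proj2 (Hs t Ht)))).
  assert (dI : forall t, 0 <= t -> is_derive I t (fI b beta nu delta alpha p (S t) (I t) (Rc t)))
    by (intros t Ht; exact (proj1 (proj2 (Hs t Ht)))).
  assert (cI : forall t, 0 <= t -> continuous I t) by (intros t Ht; eapply der_cont, dI, Ht).
  assert (HK1 : nu * A / (b + alpha - delta * A) <= K) by apply Rmax_r.
  assert (HK0 : Rc 0 <= K) by apply Rmax_l.
  assert (HKk : nu * A <= K * (b + alpha - delta * A)).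
  { apply (Rmult_le_compat_r (b + alpha - delta * A)) in HK1; [|lra].
    unfold Rdiv in HK1. rewrite Rmult_assoc, Rinv_l in HK1 by lra. lra. }
  intros t Ht.
  assert (A0 : 0 <= K - Rc t).
  { apply (pos_lemma (fun s => K - Rc s) (fun s => 0 - fR b beta nu delta alpha p (S s) (I s) (Rc s))
       (fun s => - (b + alpha) + delta * I s) 0).
    - intros s Hs0. apply dR_minus; [apply dR_const | apply dR]; exact Hs0.
    - intros s Hs0. apply (cR_plus (fun _ => - (b + alpha)) (fun s => delta * I s)); [apply cR_const|].
      apply (cR_mult (fun _ => delta)); [apply cR_const| auto].
    - lra.
    - intros s Hs0 _. unfold fR. destruct (Hinv s Hs0) as [_ [HIs [HRs _]]].
      specialize (HA s Hs0).
      assert (0 <= K) by (destruct H0 as [_ [_ [? _]]]; lra).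
      assert (0 <= (delta * A - delta * I s) * K) by (apply Rmult_le_pos; nra).
      assert (nu * I s <= nu * A) by (apply Rmult_le_compat_l; lra).
      lra.
    - exact Ht. }
  lra.
Qed.

Lemma R_tail S I Rc t1 eta : is_solution b beta nu delta alpha p S I Rc -> in_Dfra (S 0) (I 0) (Rc 0) ->
  0 <= t1 -> (forall t, t1 <= t -> I t <= eta) -> 0 < b + alpha - delta * eta ->
  forall t, t1 <= t -> Rc t <= nu * eta / (b + alpha - delta * eta) + Rc t1 * exp (- (b + alpha - delta * eta) * (t - t1)).
Proof.
  intros Hs H0 Ht1 HA Hk.
  assert (Hinv := invariance S I Rc Hs H0).
  set (k := b + alpha - delta * eta).
  assert (dR : forall t, 0 <= t -> is_derive Rc t (fR b beta nu delta alpha p (S t) (I t) (Rc t)))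
    by (intros t Ht; exact (proj2 (proj2 (Hs t Ht)))).
  assert (de : forall t, is_derive (fun s => nu * eta / k + Rc t1 * exp (- k * (s - t1))) t
                (Rc t1 * (- k * exp (- k * (t - t1))))).
  { intros t. auto_derive; [trivial | unfold Rminus; ring]. }
  intros t Ht.
  assert (A0 : 0 <= nu * eta / k + Rc t1 * exp (- k * (t - t1)) - Rc t).
  { apply (pos_lemma (fun s => nu * eta / k + Rc t1 * exp (- k * (s - t1)) - Rc s)
       (fun s => Rc t1 * (- k * exp (- k * (s - t1))) - fR b beta nu delta alpha p (S s) (I s) (Rc s))
       (fun s => - k) t1).
    - intros s Hs0. apply dR_minus; [apply de | apply dR; lra].
    - intros s Hs0. apply cR_const.
    - rewrite Rminus_diag, Rmult_0_r, exp_0, Rmult_1_r.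
      assert (0 <= nu * eta / k).
      { destruct (Hinv 0 (Rle_refl 0)) as [_ [HI0 _]]. specialize (HA t1 (Rle_refl _)).
        destruct (Hinv t1 Ht1) as [_ [HIt _]].
        unfold Rdiv. apply Rmult_le_pos. apply Rmult_le_pos; lra. left; apply Rinv_0_lt_compat; auto. }
      lra.
    - intros s Hs0 _. unfold fR. destruct (Hinv s ltac:(lra)) as [_ [HIs [HRs _]]].
      specialize (HA s Hs0).
      assert (0 <= (delta * eta - delta * I s) * Rc s) by (apply Rmult_le_pos; nra).
      assert (nu * I s <= nu * eta) by (apply Rmult_le_compat_l; lra).
      assert (E : - k * (nu * eta / k) = - (nu * eta)) by (field; unfold k; lra).
      replace (- k * (nu * eta / k + Rc t1 * exp (- k * (s - t1)) - Rc s)) with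
        (- k * (nu * eta / k) - k * Rc t1 * exp (- k * (s - t1)) + k * Rc s) by ring.
      rewrite E. unfold k. lra.
    - exact Ht. }
  lra.
Qed.

Lemma div_lt_iff x D e : 0 < D -> x < e * D -> x / D < e.
Proof. intros HD H. apply Rmult_lt_reg_r with D; auto. unfold Rdiv. rewrite Rmult_assoc, Rinv_l, Rmult_1_r; lra. Qed.

Lemma I_small S I Rc : beta <= gamma0 b nu delta p ->
  is_solution b beta nu delta alpha p S I Rc -> in_Dfra (S 0) (I 0) (Rc 0) ->
  forall eta, 0 < eta -> exists t1, 0 <= t1 /\ forall t, t1 <= t -> I t < eta.
Proof.
  intros Hbg Hs H0 eta Heta.
  destruct (I_decay S I Rc Hbg Hs H0) as [c [Hc Hd]].
  assert (HI0 : 0 <= I 0) by (destruct H0 as [_ [? _]]; auto).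
  exists (1 / (c * eta) + 1). split.
  { assert (0 < 1 / (c * eta)) by (apply Rdiv_lt_0_compat; [lra | apply Rmult_lt_0_compat; lra]). lra. }
  intros t Ht.
  assert (Hp0 : 0 < 1 / (c * eta)) by (apply Rdiv_lt_0_compat; [lra | apply Rmult_lt_0_compat; lra]).
  assert (Hct : 1 < c * eta * t).
  { assert (1 / (c * eta) < t) by lra.
    apply (Rmult_lt_compat_l (c * eta)) in H; [|apply Rmult_lt_0_compat; lra].
    replace (c * eta * (1 / (c * eta))) with 1 in H by (field; split; lra). lra. }
  eapply Rle_lt_trans. apply Hd. lra.
  assert (0 <= c * I 0 * t) by (apply Rmult_le_pos; [apply Rmult_le_pos|]; lra).
  apply div_lt_iff. lra.
  assert (I 0 <= eta * (c * I 0 * t)) by nra. nra.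
Qed.

Lemma R_small S I Rc : beta <= gamma0 b nu delta p ->
  is_solution b beta nu delta alpha p S I Rc -> in_Dfra (S 0) (I 0) (Rc 0) ->
  forall eps, 0 < eps -> exists T, 0 <= T /\ forall t, T <= t -> Rc t < eps.
Proof.
  intros Hbg Hs H0 eps Heps.
  assert (Hinv := invariance S I Rc Hs H0).
  set (eta := Rmin ((b + alpha) / (2 * delta)) (eps * (b + alpha) / (8 * nu))).
  assert (He1 : eta <= (b + alpha) / (2 * delta)) by apply Rmin_l.
  assert (He2 : eta <= eps * (b + alpha) / (8 * nu)) by apply Rmin_r.
  assert (He0 : 0 < eta).
  { unfold eta, Rmin. destruct (Rle_dec _ _).
    apply Rdiv_lt_0_compat; lra. apply Rdiv_lt_0_compat; [apply Rmult_lt_0_compat|]; lra. }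
  destruct (I_small S I Rc Hbg Hs H0 eta He0) as [t1 [Ht1 HI]].
  set (k := b + alpha - delta * eta).
  assert (Hk : (b + alpha) / 2 <= k).
  { unfold k. apply (Rmult_le_compat_l delta) in He1; [|lra].
    replace (delta * ((b + alpha) / (2 * delta))) with ((b + alpha) / 2) in He1 by (field; lra). lra. }
  assert (Hk0 : 0 < k) by lra.
  assert (HT := R_tail S I Rc t1 eta Hs H0 Ht1 (fun t Ht => Rlt_le _ _ (HI t Ht)) Hk0).
  fold k in HT.
  assert (Hne : nu * eta / k <= eps / 4).
  { unfold Rdiv at 1. apply Rle_trans with (nu * eta * / ((b + alpha) / 2)).
    apply Rmult_le_compat_l. apply Rmult_le_pos; lra. apply Rinv_le_contravar; lra.
    apply (Rmult_le_compat_l nu) in He2; [|lra].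
    replace (nu * (eps * (b + alpha) / (8 * nu))) with (eps * (b + alpha) / 8) in He2 by (field; lra).
    replace (nu * eta * / ((b + alpha) / 2)) with (2 * (nu * eta) / (b + alpha)) by (field; lra).
    apply Rle_trans with (2 * (eps * (b + alpha) / 8) / (b + alpha)).
    unfold Rdiv. apply Rmult_le_compat_r. left; apply Rinv_0_lt_compat; lra. lra.
    right; field; lra. }
  set (L := Rabs (ln (eps / 2))).
  exists (t1 + L / k). split.
  { assert (0 <= L / k) by (apply Rmult_le_pos; [apply Rabs_pos | left; apply Rinv_0_lt_compat; lra]). lra. }
  intros t Ht.
  assert (Ht' : t1 <= t) by (assert (0 <= L / k) by (apply Rmult_le_pos; [apply Rabs_pos | left; apply Rinv_0_lt_compat; lra]); lra).
  specialize (HT t Ht').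
  assert (Hex : exp (- k * (t - t1)) <= eps / 2).
  { rewrite <- (exp_ln (eps / 2)) by lra. destruct (Req_dec (- k * (t - t1)) (ln (eps / 2))) as [E|E].
    rewrite E; lra. left. apply exp_increasing.
    assert (L <= k * (t - t1)).
    { apply (Rmult_le_compat_l k) in Ht; [|lra].
      replace (k * (t1 + L / k)) with (k * t1 + L) in Ht by (field; lra). nra. }
    assert (- L <= ln (eps / 2)) by (unfold L; pose proof (Rabs_pos (ln (eps/2))); apply Ropp_le_cancel; rewrite Ropp_involutive; rewrite <- Rabs_Ropp; apply Rle_abs).
    lra. }
  destruct (Hinv t1 Ht1) as [_ [_ [HR1 HN1]]].
  destruct (Hinv t1 Ht1) as [HS1 [HI1 _]].
  assert (Rc t1 <= 1) by lra.
  assert (Rc t1 * exp (- k * (t - t1)) <= 1 * (eps / 2)).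
  { apply Rmult_le_compat; auto. left; apply exp_pos. }
  apply Rle_lt_trans with (nu * eta / k + Rc t1 * exp (- k * (t - t1))). exact HT. lra.
Qed.

Lemma lim_from_eps (f : R -> R) (l : R) :
  (forall eps, 0 < eps -> exists M, forall t, M <= t -> Rabs (f t - l) < eps) -> is_lim f p_infty l.
Proof.
  intros H. apply is_lim_spec. intros eps. destruct (H eps (cond_pos eps)) as [M HM].
  exists M. intros t Ht. apply HM. lra.
Qed.

Lemma attracting_part : beta <= gamma0 b nu delta p -> E0_attracting b beta nu delta alpha p.
Proof.
  intros Hbg S I Rc Hs H0.
  assert (Hinv := invariance S I Rc Hs H0).
  assert (LI : forall eps, 0 < eps -> exists T, 0 <= T /\ forall t, T <= t -> Rabs (I t) < eps).
  { intros eps He. destruct (I_small S I Rc Hbg Hs H0 eps He) as [T [HT HTT]]. exists T. split; auto.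
    intros t Ht. destruct (Hinv t ltac:(lra)) as [_ [HI _]]. rewrite Rabs_right by lra. auto. }
  assert (LR : forall eps, 0 < eps -> exists T, 0 <= T /\ forall t, T <= t -> Rabs (Rc t) < eps).
  { intros eps He. destruct (R_small S I Rc Hbg Hs H0 eps He) as [T [HT HTT]]. exists T. split; auto.
    intros t Ht. destruct (Hinv t ltac:(lra)) as [_ [_ [HR _]]]. rewrite Rabs_right by lra. auto. }
  split; [|split].
  - apply lim_from_eps. intros eps He.
    destruct (LI (eps/2) ltac:(lra)) as [T1 [H1 HT1]]. destruct (LR (eps/2) ltac:(lra)) as [T2 [H2 HT2]].
    exists (Rmax T1 T2). intros t Ht.
    assert (T1 <= t) by (eapply Rle_trans; [apply Rmax_l | exact Ht]).
    assert (T2 <= t) by (eapply Rle_trans; [apply Rmax_r | exact Ht]).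
    destruct (Hinv t ltac:(lra)) as [_ [_ [_ HN]]].
    replace (S t - 1) with (- (I t + Rc t)) by lra. rewrite Rabs_Ropp.
    eapply Rle_lt_trans. apply Rabs_triang. specialize (HT1 t H). specialize (HT2 t H3). lra.
  - apply lim_from_eps. intros eps He. destruct (LI eps He) as [T [_ HT]]. exists T. intros t Ht.
    rewrite Rminus_0_r. auto.
  - apply lim_from_eps. intros eps He. destruct (LR eps He) as [T [_ HT]]. exists T. intros t Ht.
    rewrite Rminus_0_r. auto.
Qed.

Lemma sqrt_lt_sq x e : 0 <= x -> 0 < e -> x < e * e -> sqrt x < e.
Proof.
  intros Hx He H. rewrite <- (sqrt_square e) by lra. apply sqrt_lt_1; auto. nra.
Qed.

Lemma sq_of_sqrt x e : 0 <= x -> sqrt x < e -> x < e * e.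
Proof.
  intros Hx H. pose proof (sqrt_sqrt x Hx). pose proof (sqrt_pos x). nra.
Qed.

Lemma stable_part : beta <= gamma0 b nu delta p -> E0_stable b beta nu delta alpha p.
Proof.
  intros Hbg eps Heps.
  set (Q := 2 + 2 * nu / (b + alpha)).
  assert (HQ : 2 <= Q) by (unfold Q; assert (0 <= 2 * nu / (b + alpha)) by (apply Rmult_le_pos; [lra| left; apply Rinv_0_lt_compat; lra]); lra).
  set (d := Rmin ((b + alpha) / (2 * delta)) (eps / (4 * Q))).
  assert (Hd1 : d <= (b + alpha) / (2 * delta)) by apply Rmin_l.
  assert (Hd2 : d <= eps / (4 * Q)) by apply Rmin_r.
  assert (Hd0 : 0 < d).
  { unfold d, Rmin. destruct (Rle_dec _ _); apply Rdiv_lt_0_compat; lra. }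
  exists d. split; auto.
  intros S I Rc Hs H0 Hdist t Ht.
  assert (Hinv := invariance S I Rc Hs H0).
  destruct H0 as [HS0 [HI0 [HR0 HN0]]] eqn:EH0.
  unfold distE0 in Hdist.
  assert (Hx0 : 0 <= (S 0 - 1) ^ 2 + I 0 ^ 2 + Rc 0 ^ 2) by (simpl; nra).
  apply sq_of_sqrt in Hdist; auto.
  assert (HI0d : I 0 < d) by (simpl in Hdist; nra).
  assert (HR0d : Rc 0 < d) by (simpl in Hdist; nra).
  destruct (I_decay S I Rc Hbg Hs H0) as [c [Hc Hdec]].
  assert (HIt : forall s, 0 <= s -> I s <= d).
  { intros s Hs0. eapply Rle_trans. apply Hdec; auto.
    assert (0 <= c * I 0 * s) by (apply Rmult_le_pos; [apply Rmult_le_pos|]; lra).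
    unfold Rdiv. apply Rle_trans with (I 0 * 1). apply Rmult_le_compat_l; auto.
    rewrite <- Rinv_1. apply Rinv_le_contravar; lra. lra. }
  assert (Hdk : delta * d <= (b + alpha) / 2).
  { apply (Rmult_le_compat_l delta) in Hd1; [|lra].
    replace (delta * ((b + alpha) / (2 * delta))) with ((b + alpha) / 2) in Hd1 by (field; lra). lra. }
  assert (HRu := R_upper S I Rc d Hs H0 HIt ltac:(lra) t Ht).
  assert (Hm : nu * d / (b + alpha - delta * d) <= 2 * nu * d / (b + alpha)).
  { unfold Rdiv. apply Rle_trans with (nu * d * / ((b + alpha) / 2)).
    apply Rmult_le_compat_l. apply Rmult_le_pos; lra. apply Rinv_le_contravar; lra.
    right; field; lra. }
  assert (HRt : Rc t <= d + 2 * nu * d / (b + alpha)).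
  { eapply Rle_trans. exact HRu. apply Rmax_lub.
    assert (0 <= 2 * nu * d / (b + alpha)) by (apply Rmult_le_pos; [nra| left; apply Rinv_0_lt_compat; lra]). lra.
    assert (0 <= d) by lra. lra. }
  destruct (Hinv t Ht) as [HSt [HIt' [HRt' HNt]]].
  set (W := I t + Rc t).
  assert (HW : W <= d * Q).
  { unfold W, Q. specialize (HIt t Ht).
    replace (d * (2 + 2 * nu / (b + alpha))) with (2 * d + 2 * nu * d / (b + alpha)) by (field; lra). lra. }
  assert (HdQ : d * Q <= eps / 4).
  { apply (Rmult_le_compat_r Q) in Hd2; [|lra].
    replace (eps / (4 * Q) * Q) with (eps / 4) in Hd2 by (field; lra). lra. }
  unfold distE0. apply sqrt_lt_sq; auto. simpl; nra.
  replace (S t - 1) with (- W) by (unfold W; lra). simpl.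
  assert (I t * I t + Rc t * Rc t <= W * W) by (unfold W; nra).
  assert (0 <= W) by (unfold W; lra).
  assert (W * W <= (eps / 4) * (eps / 4)) by (apply Rmult_le_compat; lra).
  nra.
Qed.

Definition FI (i r : R) : R := (beta * cl (1 - i - r) - gamma0 b nu delta p + delta * cl i) * cl i.
Definition FR (i r : R) : R := nu * cl i - (b + alpha - delta * cl i) * cl r.
Definition LL : R := 2 * beta + gamma0 b nu delta p + 2 * delta + nu + b + alpha.

Lemma gam_pos : 0 < gamma0 b nu delta p.
Proof. unfold gamma0. assert (0 < (1 - p) * b) by (apply Rmult_lt_0_compat; lra). lra. Qed.

Lemma FI_lip : Lip FI LL.
Proof.
  intros i r i' r'. unfold FI, LL. pose proof gam_pos.
  set (Di := Rabs (i - i')). set (Dr := Rabs (r - r')).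
  assert (H1 : Rabs (cl i - cl i') <= Di) by apply cl_lip.
  assert (H3 : Rabs (cl (1 - i - r) - cl (1 - i' - r')) <= Di + Dr).
  { eapply Rle_trans. apply cl_lip. replace (1 - i - r - (1 - i' - r')) with (- (i - i') + - (r - r')) by ring.
    eapply Rle_trans. apply Rabs_triang. rewrite !Rabs_Ropp. unfold Di, Dr; lra. }
  pose proof (cl_bounds i). pose proof (cl_bounds i'). pose proof (cl_bounds (1 - i' - r')).
  replace ((beta * cl (1 - i - r) - gamma0 b nu delta p + delta * cl i) * cl i -
      (beta * cl (1 - i' - r') - gamma0 b nu delta p + delta * cl i') * cl i') with
    ((beta * (cl (1 - i - r) - cl (1 - i' - r')) + delta * (cl i - cl i')) * cl i +
     (beta * cl (1 - i' - r') - gamma0 b nu delta p + delta * cl i') * (cl i - cl i')) by ring.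
  eapply Rle_trans. apply Rabs_triang.
  assert (A1 : Rabs ((beta * (cl (1 - i - r) - cl (1 - i' - r')) + delta * (cl i - cl i')) * cl i)
      <= (beta * (Di + Dr) + delta * Di) * 1).
  { apply abs_prod_le. eapply Rle_trans. apply Rabs_triang. rewrite !Rabs_mult, (Rabs_right beta), (Rabs_right delta) by lra.
    apply Rplus_le_compat; apply Rmult_le_compat_l; lra.
    rewrite Rabs_right; lra. }
  assert (A2 : Rabs ((beta * cl (1 - i' - r') - gamma0 b nu delta p + delta * cl i') * (cl i - cl i'))
      <= (beta + gamma0 b nu delta p + delta) * Di).
  { apply abs_prod_le; auto. apply Rabs_le. split; nra. }
  assert (0 <= Di) by apply Rabs_pos. assert (0 <= Dr) by apply Rabs_pos.
  nra.
Qed.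

Lemma FR_lip : Lip FR LL.
Proof.
  intros i r i' r'. unfold FR, LL. pose proof gam_pos.
  set (Di := Rabs (i - i')). set (Dr := Rabs (r - r')).
  assert (H1 : Rabs (cl i - cl i') <= Di) by apply cl_lip.
  assert (H2 : Rabs (cl r - cl r') <= Dr) by apply cl_lip.
  pose proof (cl_bounds i'). pose proof (cl_bounds r).
  replace (nu * cl i - (b + alpha - delta * cl i) * cl r - (nu * cl i' - (b + alpha - delta * cl i') * cl r')) with
    (nu * (cl i - cl i') + - ((b + alpha) * (cl r - cl r')) + delta * ((cl i - cl i') * cl r + cl i' * (cl r - cl r'))) by ring.
  eapply Rle_trans. apply Rabs_triang. eapply Rle_trans. apply Rplus_le_compat_r. apply Rabs_triang.
  rewrite Rabs_Ropp, !Rabs_mult, !(Rabs_right nu), (Rabs_right (b + alpha)), (Rabs_right delta) by lra.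
  assert (A : Rabs ((cl i - cl i') * cl r + cl i' * (cl r - cl r')) <= Di + Dr).
  { eapply Rle_trans. apply Rabs_triang.
    assert (Rabs ((cl i - cl i') * cl r) <= Di * 1) by (apply abs_prod_le; auto; rewrite Rabs_right; lra).
    assert (Rabs (cl i' * (cl r - cl r')) <= 1 * Dr) by (apply abs_prod_le; auto; rewrite Rabs_right; lra).
    lra. }
  assert (0 <= Di) by apply Rabs_pos. assert (0 <= Dr) by apply Rabs_pos.
  assert (nu * Rabs (cl i - cl i') <= nu * Di) by (apply Rmult_le_compat_l; lra).
  assert ((b + alpha) * Rabs (cl r - cl r') <= (b + alpha) * Dr) by (apply Rmult_le_compat_l; lra).
  assert (delta * Rabs ((cl i - cl i') * cl r + cl i' * (cl r - cl r')) <= delta * (Di + Dr)) by (apply Rmult_le_compat_l; lra).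
  nra.
Qed.

Lemma FI_bound i r : Rabs (FI i r) <= LL.
Proof.
  unfold FI, LL. pose proof gam_pos. pose proof (cl_bounds i). pose proof (cl_bounds (1 - i - r)).
  eapply Rle_trans. apply (abs_prod_le _ _ (beta + gamma0 b nu delta p + delta) 1).
  apply Rabs_le. split; nra. rewrite Rabs_right; lra. lra.
Qed.

Lemma FR_bound i r : Rabs (FR i r) <= LL.
Proof.
  unfold FR, LL. pose proof gam_pos. pose proof (cl_bounds i). pose proof (cl_bounds r).
  eapply Rle_trans. apply Rabs_triang. rewrite Rabs_Ropp.
  assert (Rabs (nu * cl i) <= nu * 1) by (apply abs_prod_le; rewrite Rabs_right; lra).
  assert (Rabs ((b + alpha - delta * cl i) * cl r) <= (b + alpha + delta) * 1).
  { apply abs_prod_le. apply Rabs_le. split; nra. rewrite Rabs_right; lra. }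
  lra.
Qed.

Lemma exist_sol i0 r0 : 0 <= i0 -> 0 <= r0 -> i0 + r0 <= 1 ->
  exists S I Rc, is_solution b beta nu delta alpha p S I Rc /\
    S 0 = 1 - i0 - r0 /\ I 0 = i0 /\ Rc 0 = r0.
Proof.
  intros Hi0 Hr0 Hir.
  assert (HL : 0 <= LL) by (unfold LL; pose proof gam_pos; lra).
  destruct (picard FI FR LL LL i0 r0 HL HL FI_lip FR_lip FI_bound FR_bound) as [X [Y [HX0 [HY0 HD]]]].
  assert (dX : forall t, 0 <= t -> is_derive X t (FI (X t) (Y t))) by (intros t _; apply HD).
  assert (dY : forall t, 0 <= t -> is_derive Y t (FR (X t) (Y t))) by (intros t _; apply HD).
  assert (cX : forall t, continuous X t) by (intros t; eapply der_cont; apply HD).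
  assert (cY : forall t, continuous Y t) by (intros t; eapply der_cont; apply HD).
  assert (PX : forall t, 0 <= t -> 0 <= X t).
  { apply (pos_lemma X (fun t => FI (X t) (Y t)) (fun _ => 0) 0 dX).
    - intros; apply cR_const.
    - lra.
    - intros t Ht Hn. unfold FI. rewrite (cl_neg (X t)) by lra. lra. }
  assert (PY : forall t, 0 <= t -> 0 <= Y t).
  { apply (pos_lemma Y (fun t => FR (X t) (Y t)) (fun _ => 0) 0 dY).
    - intros; apply cR_const.
    - lra.
    - intros t Ht Hn. unfold FR. rewrite (cl_neg (Y t)) by lra.
      pose proof (cl_bounds (X t)). assert (0 <= nu * cl (X t)) by (apply Rmult_le_pos; lra). lra. }
  assert (PZ : forall t, 0 <= t -> 0 <= 1 - X t - Y t).
  { apply (pos_lemma (fun t => 1 - X t - Y t) (fun t => 0 - FI (X t) (Y t) - FR (X t) (Y t))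
        (fun s => delta * cl (X s)) 0).
    - intros t Ht. apply dR_minus; [apply dR_minus|]. apply dR_const. apply dX; auto. apply dY; auto.
    - intros t Ht. apply (lip_cont (fun a _ => delta * cl a) delta X X); auto; try lra.
      intros a b0 a' b'. rewrite <- Rmult_minus_distr_l, Rabs_mult, Rabs_right by lra.
      apply Rmult_le_compat_l; [lra|]. pose proof (cl_lip a a'). pose proof (Rabs_pos (b0 - b')). lra.
    - lra.
    - intros t Ht Hn. specialize (PX t Ht). specialize (PY t Ht).
      unfold FI, FR. rewrite (cl_neg (1 - X t - Y t)) by lra.
      pose proof (cl_bounds (X t)). pose proof (cl_bounds (Y t)).
      pose proof (cl_le (X t) PX). pose proof (cl_le (Y t) PY).
      assert (0 <= delta * cl (X t) * ((X t - cl (X t)) + (Y t - cl (Y t)))) by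
        (apply Rmult_le_pos; [apply Rmult_le_pos|]; lra).
      assert (0 <= (1 - p) * b * cl (X t)) by (apply Rmult_le_pos; [apply Rmult_le_pos|]; lra).
      assert (0 <= (b + alpha) * cl (Y t)) by (apply Rmult_le_pos; lra).
      unfold gamma0. lra. }
  assert (Cid : forall t, 0 <= t -> cl (X t) = X t /\ cl (Y t) = Y t /\ cl (1 - X t - Y t) = 1 - X t - Y t).
  { intros t Ht. specialize (PX t Ht). specialize (PY t Ht). specialize (PZ t Ht).
    repeat split; apply cl_id; lra. }
  exists (fun t => 1 - X t - Y t), X, Y. split; [|repeat split; auto; rewrite HX0, HY0; ring].
  intros t Ht. destruct (Cid t Ht) as [E1 [E2 E3]].
  split; [|split].
  - assert (E : 0 - FI (X t) (Y t) - FR (X t) (Y t) = fS b beta nu delta alpha p (1 - X t - Y t) (X t) (Y t)).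
    { unfold FI, FR, fS. rewrite E1, E2, E3. unfold gamma0. ring. }
    rewrite <- E. apply dR_minus; [apply dR_minus|]. apply dR_const. apply dX; auto. apply dY; auto.
  - assert (E : FI (X t) (Y t) = fI b beta nu delta alpha p (1 - X t - Y t) (X t) (Y t)).
    { unfold FI, fI. rewrite E1, E3. unfold gamma0. ring. }
    rewrite <- E. apply dX; auto.
  - assert (E : FR (X t) (Y t) = fR b beta nu delta alpha p (1 - X t - Y t) (X t) (Y t)).
    { unfold FR, fR. rewrite E1, E2. ring. }
    rewrite <- E. apply dY; auto.
Qed.

Lemma unstable_part : basicR0 b beta nu delta p > 1 -> ~ E0_stable b beta nu delta alpha p.
Proof.
  intros HR0 Hst.
  pose proof gam_pos as Hg.
  assert (Hbg : gamma0 b nu delta p < beta).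
  { unfold basicR0 in HR0. apply (Rmult_lt_compat_r (gamma0 b nu delta p)) in HR0; auto.
    unfold Rdiv in HR0. rewrite Rmult_assoc, Rinv_l in HR0 by lra. lra. }
  set (a0 := beta - gamma0 b nu delta p).
  set (Wc := Rabs (beta - delta) + beta).
  assert (HWc : 0 < Wc) by (unfold Wc; pose proof (Rabs_pos (beta - delta)); lra).
  set (eps := Rmin 1 (a0 / (2 * Wc))).
  assert (He1 : eps <= 1) by apply Rmin_l.
  assert (He2 : eps <= a0 / (2 * Wc)) by apply Rmin_r.
  assert (He0 : 0 < eps).
  { unfold eps, Rmin. destruct (Rle_dec _ _). lra. apply Rdiv_lt_0_compat; unfold a0; lra. }
  destruct (Hst eps He0) as [d [Hd Hdd]].
  set (i0 := Rmin (d / 2) (eps / 2)).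
  assert (Hi1 : i0 <= d / 2) by apply Rmin_l.
  assert (Hi2 : i0 <= eps / 2) by apply Rmin_r.
  assert (Hi0 : 0 < i0) by (unfold i0, Rmin; destruct (Rle_dec _ _); lra).
  destruct (exist_sol i0 0 ltac:(lra) ltac:(lra) ltac:(lra)) as [S [I [Rc [Hs [HS0 [HI0 HR0']]]]]].
  assert (Hin : in_Dfra (S 0) (I 0) (Rc 0)) by (unfold in_Dfra; rewrite HS0, HI0, HR0'; lra).
  assert (Hd0 : distE0 (S 0) (I 0) (Rc 0) < d).
  { unfold distE0. rewrite HS0, HI0, HR0'. apply sqrt_lt_sq. simpl; nra. lra. simpl; nra. }
  specialize (Hdd S I Rc Hs Hin Hd0).
  assert (Hinv := invariance S I Rc Hs Hin).
  assert (Hsm : forall t, 0 <= t -> I t < eps /\ Rc t < eps).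
  { intros t Ht. specialize (Hdd t Ht). unfold distE0 in Hdd.
    destruct (Hinv t Ht) as [HSt [HIt [HRt HNt]]].
    apply sq_of_sqrt in Hdd; [|simpl; nra]. simpl in Hdd. split; nra. }
  set (c := a0 / 2).
  assert (Hc : 0 < c) by (unfold c, a0; lra).
  assert (Hcw : Wc * eps <= a0 / 2).
  { apply (Rmult_le_compat_l Wc) in He2; [|lra].
    replace (Wc * (a0 / (2 * Wc))) with (a0 / 2) in He2 by (field; lra). lra. }
  assert (dI : forall t, 0 <= t -> is_derive I t (fI b beta nu delta alpha p (S t) (I t) (Rc t)))
    by (intros t Ht; exact (proj1 (proj2 (Hs t Ht)))).
  assert (Hgrow : forall t, 0 <= t -> 0 <= I t - i0 * exp (c * t)).
  { apply (pos_lemma (fun t => I t - i0 * exp (c * t))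
        (fun t => fI b beta nu delta alpha p (S t) (I t) (Rc t) - i0 * (c * exp (c * t))) (fun _ => c) 0).
    - intros t Ht. apply dR_minus. apply dI; auto. auto_derive; [trivial | ring].
    - intros; apply cR_const.
    - rewrite HI0, Rmult_0_r, exp_0. lra.
    - intros t Ht _. destruct (Hinv t Ht) as [HSt [HIt [HRt HNt]]]. destruct (Hsm t Ht) as [H1 H2].
      unfold fI. replace (S t) with (1 - I t - Rc t) by lra.
      assert ((beta - delta) * I t <= Rabs (beta - delta) * I t) by (apply Rmult_le_compat_r; [lra | apply Rle_abs]).
      assert (Rabs (beta - delta) * I t <= Rabs (beta - delta) * eps) by (apply Rmult_le_compat_l; [apply Rabs_pos | lra]).
      assert (beta * Rc t <= beta * eps) by (apply Rmult_le_compat_l; lra).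
      assert (c <= beta * (1 - I t - Rc t) - gamma0 b nu delta p + delta * I t).
      { assert (a0 = beta - gamma0 b nu delta p) by reflexivity. assert (c = a0 / 2) by reflexivity. unfold Wc in Hcw. lra. }
      assert (c * I t <= (beta * (1 - I t - Rc t) - gamma0 b nu delta p + delta * I t) * I t)
        by (apply Rmult_le_compat_r; lra).
      cbv beta. unfold gamma0 in *. lra. }
  set (T := ln (eps / i0) / c).
  assert (Hq : 2 <= eps / i0).
  { apply (Rmult_le_reg_r i0); auto. unfold Rdiv. rewrite Rmult_assoc, Rinv_l, Rmult_1_r by lra. lra. }
  assert (HT : 0 <= T).
  { unfold T. apply Rmult_le_pos. rewrite <- ln_1. apply ln_le; lra. left; apply Rinv_0_lt_compat; lra. }
  specialize (Hgrow T HT).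
  assert (E : i0 * exp (c * T) = eps).
  { unfold T. replace (c * (ln (eps / i0) / c)) with (ln (eps / i0)) by (field; lra).
    rewrite exp_ln by lra. field. lra. }
  destruct (Hsm T HT). lra.
Qed.

Lemma main_sec :
  (E0_GAS b beta nu delta alpha p <-> basicR0 b beta nu delta p <= 1) /\
  (basicR0 b beta nu delta p > 1 -> E0_unstable b beta nu delta alpha p).
Proof.
  pose proof gam_pos as Hg.
  assert (Heq : basicR0 b beta nu delta p <= 1 -> beta <= gamma0 b nu delta p).
  { intros H. unfold basicR0 in H. apply (Rmult_le_compat_r (gamma0 b nu delta p)) in H; [|lra].
    unfold Rdiv in H. rewrite Rmult_assoc, Rinv_l in H by lra. lra. }
  split; [split|].
  - intros [Hs _]. destruct (Rle_dec (basicR0 b beta nu delta p) 1) as [|Hn]; auto.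
    exfalso. apply (unstable_part); auto. lra.
  - intros H. split; [apply stable_part | apply attracting_part]; auto.
  - apply unstable_part.
Qed.

End Model.

Theorem theorem1 (b beta nu delta alpha p : R) :
  0 < b -> 0 < beta -> 0 < nu -> 0 < delta -> 0 < alpha -> 0 < p < 1 ->
  (E0_GAS b beta nu delta alpha p <-> basicR0 b beta nu delta p <= 1) /\
  (basicR0 b beta nu delta p > 1 -> E0_unstable b beta nu delta alpha p).
Proof.
  intros. apply main_sec; auto.
Qed.
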